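(* Let $\nabla$ be a module connection on $M$ with associated connection $(\mathsf K_\nabla,\mathsf H_\nabla)$ on $\mathsf q_M$. Then $\mathsf C_{\mathsf K_\nabla}(a)=a$ for all $a\in A$ and $\mathsf C_{\mathsf K_\nabla}(m)=\psi(\nabla^2(m))$ for all $m\in M$. In particular, if $\nabla^2=0$ then $(\mathsf K_\nabla,\mathsf H_\nabla)$ is flat.
   Context: Fix a commutative ring $R$, a commutative $R$-algebra $A$ and an $A$-module $M$; algebra maps are $R$-algebra homomorphisms. $\Omega(A)$ is the Kähler module of $A$ over $R$ with universal derivation $\mathsf d$, and a module connection on $M$ is an $R$-linear $\nabla:M\to\Omega(A)\otimes_AM$ with $\nabla(am)=a\nabla(m)+\mathsf d(a)\otimes m$. $\mathsf S_A(M)$ is the symmetric $A$-algebra on $M$; for an algebra $B$, $\mathsf T(B)=\mathrm{Sym}_B(\Omega(B))$ with universal derivation $\mathsf d:B\to\mathsf T(B)$, and $\mathsf T^2(B)=\mathsf T(\mathsf T(B))$ with universal derivation $\mathsf d':\mathsf T(B)\to\mathsf T^2(B)$. For an algebra map $h:X\to Y$, $\mathsf T(h)$ sends $x\mapsto h(x)$ and $\delta_X(x)\mapsto\delta_Y(h(x))$ ($\delta$ the universal derivations). $\mathsf c_B:\mathsf T^2(B)\to\mathsf T^2(B)$ is the algebra map $b\mapsto b$, $\mathsf d(b)\mapsto\mathsf d'(b)$, $\mathsf d'(b)\mapsto\mathsf d(b)$, $\mathsf d'\mathsf d(b)\mapsto\mathsf d'\mathsf d(b)$. $\mathsf K_\nabla:\mathsf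 S_A(M)\to\mathsf T(\mathsf S_A(M))$ is the algebra map $a\mapsto a$, $m\mapsto\mathsf d(m)-\sum_im_i\,\mathsf d(a_i)$ where $\nabla(m)=\sum_i\mathsf d(a_i)\otimes m_i$ (and $\mathsf H_\nabla$ is the algebra map $a\mapsto a\otimes1$, $m\mapsto1\otimes m$, $\mathsf d(a)\mapsto\mathsf d(a)\otimes1$, $\mathsf d(m)\mapsto\nabla(m)$). Let $\Omega^2(A)=\Omega(A)\wedge_A\Omega(A)$. Every element of $\Omega(A)\otimes_AM$ can be written as $\sum_i\mathsf d(a_i)\otimes m_i$. The curvature of $\nabla$ is $\nabla^2:M\to\Omega^2(A)\otimes_AM$, $\nabla^2(m)=\sum_i\sum_j(\mathsf d(a_i)\wedge\mathsf d(a_{ij}))\otimes m_{ij}$ where $\nabla(m)=\sum_i\mathsf d(a_i)\otimes m_i$ and $\nabla(m_i)=\sum_j\mathsf d(a_{ij})\otimes m_{ij}$ (the composite $(\omega\otimes1)\circ(1\otimes\nabla)\circ\nabla$ with $\omega(\alpha\otimes\beta)=\alpha\wedge\beta$). For a vertical connection $\mathsf K:\mathsf S_A(M)\to\mathsf T(\mathsf S_A(M))$, its curvature is the algebra map $\mathsf C_{\mathsf K}:\mathsf S_A(M)\to\mathsf T^2(\mathsf S_A(M))$ with $\mathsf C_{\mathsf K}(a)=\mathsf c_{\mathsf S_A(M)}(\mathsf T(\mathsf K)(\mathsf K(a)))$ and $\mathsf C_{\mathsf K}(m)=\mathsf c_{\mathsf S_A(M)}(\mathsf T(\mathsf K)(\mathsf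 K(m)))-\mathsf T(\mathsf K)(\mathsf K(m))$; the connection is flat if $\mathsf C_{\mathsf K}(a)=a$ and $\mathsf C_{\mathsf K}(m)=0$ for all $a\in A$, $m\in M$. The map $\psi:\Omega^2(A)\otimes_AM\to\mathsf T^2(\mathsf S_A(M))$ is $(\mathsf d(a)\wedge\mathsf d(b))\otimes m\mapsto m\,\mathsf d(a)\mathsf d'(b)-m\,\mathsf d'(a)\mathsf d(b)$, extended additively. *)

(* Defs.v *)
From HB Require Import structures.
From mathcomp Require Import all_boot all_algebra.
From Stdlib Require Import ClassicalEpsilon.

Set Implicit Arguments.
Unset Strict Implicit.
Unset Printing Implicit Defensive.

Import GRing.Theory.
Local Open Scope ring_scope.

(* Generic "the object satisfying P" (P is expected to determine it).  *)
Definition the_obj (T : Type) (P : T -> Prop) (dflt : T) : T :=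
  match excluded_middle_informative (exists x, P x) with
  | left h => proj1_sig (constructive_indefinite_description _ h)
  | right _ => dflt
  end.

Section Algebras.
Variable R : comPzRingType.

Record calg := CAlg { calg_car :> comPzRingType; calg_str : {rmorphism R -> calg_car} }.

Definition is_alg_map (X Y : calg) (f : X -> Y) : Prop :=
  (forall x y, f (x + y) = f x + f y) /\ (forall x y, f (x * y) = f x * f y) /\
  f 1 = 1 /\ (forall r, f (calg_str X r) = calg_str Y r).

Definition is_lin (A : pzRingType) (U V : lmodType A) (f : U -> V) : Prop :=
  (forall u v, f (u + v) = f u + f v) /\ (forall a u, f (a *: u) = a *: f u).

Definition is_bilin (A : pzRingType) (U V W : lmodType A) (b : U -> V -> W) : Prop :=
  (forall u1 u2 v, b (u1 + u2) v = b u1 v + b u2 v) /\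
  (forall u v1 v2, b u (v1 + v2) = b u v1 + b u v2) /\
  (forall a u v, b (a *: u) v = a *: b u v) /\
  (forall a u v, b u (a *: v) = a *: b u v).

Definition is_mder (A : calg) (N : lmodType A) (D : A -> N) : Prop :=
  (forall x y, D (x + y) = D x + D y) /\
  (forall r x, D (calg_str A r * x) = calg_str A r *: D x) /\
  (forall x y, D (x * y) = x *: D y + y *: D x).

Record kahler (A : calg) := Kahler {
  kmod : lmodType A;
  kd : A -> kmod;
  kd_der : is_mder kd;
  kd_univ : forall (N : lmodType A) (D : A -> N), is_mder D ->
    exists phi : kmod -> N, is_lin phi /\ forall a, phi (kd a) = D a;
  kd_uniq : forall (N : lmodType A) (phi psi : kmod -> N), is_lin phi -> is_lin psi ->
    (forall a, phi (kd a) = psi (kd a)) -> forall w, phi w = psi w }.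

Record tensor (A : calg) (U V : lmodType A) := Tensor {
  tsp : lmodType A;
  tm : U -> V -> tsp;
  tm_bil : is_bilin tm;
  tm_univ : forall (N : lmodType A) (b : U -> V -> N), is_bilin b ->
    exists phi : tsp -> N, is_lin phi /\ forall u v, phi (tm u v) = b u v;
  tm_uniq : forall (N : lmodType A) (phi psi : tsp -> N), is_lin phi -> is_lin psi ->
    (forall u v, phi (tm u v) = psi (tm u v)) -> forall w, phi w = psi w }.

Record ext2 (A : calg) (U : lmodType A) := Ext2 {
  esp : lmodType A;
  wedge : U -> U -> esp;
  wedge_bil : is_bilin wedge;
  wedge_alt : forall u, wedge u u = 0;
  wedge_univ : forall (N : lmodType A) (b : U -> U -> N), is_bilin b ->
    (forall u, b u u = 0) ->
    exists phi : esp -> N, is_lin phi /\ forall u v, phi (wedge u v) = b u v;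
  wedge_uniq : forall (N : lmodType A) (phi psi : esp -> N), is_lin phi -> is_lin psi ->
    (forall u v, phi (wedge u v) = psi (wedge u v)) -> forall w, phi w = psi w }.

Record symalg (A : calg) (M : lmodType A) := SymAlg {
  sym : calg;
  siA : A -> sym;
  siM : M -> sym;
  siA_alg : is_alg_map siA;
  siM_add : forall m1 m2, siM (m1 + m2) = siM m1 + siM m2;
  siM_scale : forall a m, siM (a *: m) = siA a * siM m;
  sym_univ : forall (C : calg) (f : A -> C) (g : M -> C), is_alg_map f ->
    (forall m1 m2, g (m1 + m2) = g m1 + g m2) -> (forall a m, g (a *: m) = f a * g m) ->
    exists h : sym -> C, is_alg_map h /\ (forall a, h (siA a) = f a) /\
                         (forall m, h (siM m) = g m);
  sym_uniq : forall (C : calg) (h1 h2 : sym -> C), is_alg_map h1 -> is_alg_map h2 ->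
    (forall a, h1 (siA a) = h2 (siA a)) -> (forall m, h1 (siM m) = h2 (siM m)) ->
    forall x, h1 x = h2 x }.

End Algebras.

Section Setting.
Variable R : comPzRingType.
Variable A : calg R.
Variable M : lmodType A.
Variable OA : kahler A.
Variable OAM : tensor (kmod OA) M.
Variable O2 : ext2 (kmod OA).
Variable O2M : tensor (esp O2) M.
Variable S : symalg M.
Variable OS : kahler (sym S).
Variable TS : symalg (kmod OS).               (* T(S_A(M)) = Sym(Omega(S_A(M))) *)
Variable OTS : kahler (sym TS).
Variable T2 : symalg (kmod OTS).              (* T^2(S_A(M)) = T(T(S_A(M))) *)

(* universal derivation d : B -> T(B) and d' : T(B) -> T^2(B), for B = S_A(M) *)
Definition dT (x : sym S) : sym TS := siM TS (kd OS x).
Definition dT2 (y : sym TS) : sym T2 := siM T2 (kd OTS y).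
Definition iT (x : sym S) : sym TS := siA TS x.
Definition iT2 (y : sym TS) : sym T2 := siA T2 y.

Definition is_connection (nabla : M -> tsp OAM) : Prop :=
  (forall m1 m2, nabla (m1 + m2) = nabla m1 + nabla m2) /\
  (forall r m, nabla (calg_str A r *: m) = calg_str A r *: nabla m) /\
  (forall a m, nabla (a *: m) = a *: nabla m + tm OAM (kd OA a) m).

Definition Knabla (nabla : M -> tsp OAM) : sym S -> sym TS :=
  the_obj (fun k : sym S -> sym TS =>
    is_alg_map k /\
    (forall a, k (siA S a) = iT (siA S a)) /\
    (forall m (s : seq (A * M)),
        nabla m = \sum_(p <- s) tm OAM (kd OA p.1) p.2 ->
        k (siM S m) = dT (siM S m) - \sum_(p <- s) iT (siM S p.2) * dT (siA S p.1)))
  (fun _ => 0).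

Definition Tmap (h : sym S -> sym TS) : sym TS -> sym T2 :=
  the_obj (fun f : sym TS -> sym T2 =>
    is_alg_map f /\ (forall x, f (iT x) = iT2 (h x)) /\ (forall x, f (dT x) = dT2 (h x)))
  (fun _ => 0).

Definition cflip : sym T2 -> sym T2 :=
  the_obj (fun f : sym T2 -> sym T2 =>
    is_alg_map f /\
    (forall b, f (iT2 (iT b)) = iT2 (iT b)) /\
    (forall b, f (iT2 (dT b)) = dT2 (iT b)) /\
    (forall b, f (dT2 (iT b)) = iT2 (dT b)) /\
    (forall b, f (dT2 (dT b)) = dT2 (dT b)))
  id.

Definition curvK (K : sym S -> sym TS) : sym S -> sym T2 :=
  the_obj (fun f : sym S -> sym T2 =>
    is_alg_map f /\
    (forall a, f (siA S a) = cflip (Tmap K (K (siA S a)))) /\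
    (forall m, f (siM S m) = cflip (Tmap K (K (siM S m))) - Tmap K (K (siM S m))))
  (fun _ => 0).

Definition flat (K : sym S -> sym TS) : Prop :=
  (forall a, curvK K (siA S a) = iT2 (iT (siA S a))) /\
  (forall m, curvK K (siM S m) = 0).

Definition curv (nabla : M -> tsp OAM) (m : M) : tsp O2M :=
  the_obj (fun v : tsp O2M =>
    forall s : seq (A * M * seq (A * M)),
      nabla m = \sum_(x <- s) tm OAM (kd OA x.1.1) x.1.2 ->
      (forall x, x \in s -> nabla x.1.2 = \sum_(y <- x.2) tm OAM (kd OA y.1) y.2) ->
      v = \sum_(x <- s) \sum_(y <- x.2) tm O2M (wedge O2 (kd OA x.1.1) (kd OA y.1)) y.2)
  0.

Definition psi : tsp O2M -> sym T2 :=
  the_obj (fun f : tsp O2M -> sym T2 =>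
    forall s : seq (A * A * M),
      f (\sum_(x <- s) tm O2M (wedge O2 (kd OA x.1.1) (kd OA x.1.2)) x.2) =
      \sum_(x <- s)
        (iT2 (iT (siM S x.2)) * iT2 (dT (siA S x.1.1)) * dT2 (iT (siA S x.1.2))
         - iT2 (iT (siM S x.2)) * dT2 (iT (siA S x.1.1)) * iT2 (dT (siA S x.1.2))))
  (fun _ => 0).

End Setting.

(* Main.v *)
Require Import Defs.
From HB Require Import structures.
From mathcomp Require Import all_boot all_algebra.
From Stdlib Require Import ClassicalEpsilon.
From mathcomp Require Import ring.
Set Implicit Arguments.
Unset Strict Implicit.
Unset Printing Implicit Defensive.
Import GRing.Theory.
Local Open Scope ring_scope.


Lemma the_objP (T : Type) (P : T -> Prop) d : (exists x, P x) -> P (the_obj P d).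
Proof.
move=> h; rewrite /the_obj; case: excluded_middle_informative => // h'.
exact: proj2_sig (constructive_indefinite_description _ h').
Qed.

Lemma addf0 (U V : zmodType) (f : U -> V) : (forall x y, f (x + y) = f x + f y) -> f 0 = 0.
Proof. by move=> h; apply: (addrI (f 0)); rewrite -h !addr0. Qed.

Lemma addfN (U V : zmodType) (f : U -> V) : (forall x y, f (x + y) = f x + f y) ->
  forall x, f (- x) = - f x.
Proof. by move=> h x; apply: (addrI (f x)); rewrite -h !subrr (addf0 h). Qed.

Lemma addfB (U V : zmodType) (f : U -> V) : (forall x y, f (x + y) = f x + f y) ->
  forall x y, f (x - y) = f x - f y.
Proof. by move=> h x y; rewrite h (addfN h). Qed.

Lemma addf_sum (U V : zmodType) (f : U -> V) (I : Type) (s : seq I) (F : I -> U) :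
  (forall x y, f (x + y) = f x + f y) -> f (\sum_(i <- s) F i) = \sum_(i <- s) f (F i).
Proof.
move=> h; elim: s => [|x s IH]; first by rewrite !big_nil (addf0 h).
by rewrite !big_cons h IH.
Qed.

Record rmap (K : pzRingType) (B : comPzRingType) := RMap {
  rf :> K -> B;
  rf_add : forall x y, rf (x + y) = rf x + rf y;
  rf_mul : forall x y, rf (x * y) = rf x * rf y;
  rf_1 : rf 1 = 1 }.

Definition via (K : pzRingType) (B : comPzRingType) (r : rmap K B) : Type := B.
HB.instance Definition _ (K : pzRingType) (B : comPzRingType) (r : rmap K B) :=
  GRing.Zmodule.on (via r).
Definition vscale (K : pzRingType) (B : comPzRingType) (r : rmap K B) (a : K) (x : via r) : via r :=
  (r a * (x : B) : B).
Section ViaTh.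
Variables (K : pzRingType) (B : comPzRingType) (r : rmap K B).
Fact vscaleA a b (v : via r) : @vscale K B r a (@vscale K B r b v) = @vscale K B r (a * b) v.
Proof. by rewrite /vscale rf_mul mulrA. Qed.
Fact vscale1 : left_id 1 (@vscale K B r).
Proof. by move=> v; rewrite /vscale rf_1 mul1r. Qed.
Fact vscaleDr : right_distributive (@vscale K B r) +%R.
Proof. by move=> a u v; rewrite /vscale mulrDr. Qed.
Fact vscaleDl (v : via r) : {morph @vscale K B r ^~ v : a b / a + b}.
Proof. by move=> a b; rewrite /vscale rf_add mulrDl. Qed.
End ViaTh.
HB.instance Definition _ (K : pzRingType) (B : comPzRingType) (r : rmap K B) :=
  GRing.Zmodule_isLmodule.Build K (via r) (@vscaleA K B r) (@vscale1 K B r)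
    (@vscaleDr K B r) (@vscaleDl K B r).

Lemma viaZ (K : pzRingType) (B : comPzRingType) (r : rmap K B) a (x : via r) :
  a *: x = (r a * (x : B) : B).
Proof. by []. Qed.

Definition dual (B : comPzRingType) : Type := (B * B)%type.
HB.instance Definition _ (B : comPzRingType) := GRing.Zmodule.on (dual B).
Section DualTh.
Variable B : comPzRingType.
Definition dmul (x y : dual B) : dual B := (x.1 * y.1, x.1 * y.2 + x.2 * y.1).
Definition done : dual B := (1, 0).
Fact dmulA : associative dmul.
Proof. by case=> a b [c d] [e f]; rewrite /dmul /=; congr pair; [rewrite mulrA | rewrite !mulrDr !mulrDl !mulrA addrA]. Qed.
Fact dmulC : commutative dmul.
Proof. by case=> a b [c d]; rewrite /dmul /=; congr pair; [rewrite mulrC | rewrite addrC mulrC [d * _]mulrC]. Qed.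
Fact dmul1 : left_id done dmul.
Proof. by case=> a b; rewrite /dmul /= !mul1r mul0r addr0. Qed.
Fact dmulDl : left_distributive dmul +%R.
Proof. by case=> a b [c d] [e f]; rewrite /dmul /=; congr pair; rewrite ?mulrDl // addrACA. Qed.
End DualTh.
HB.instance Definition _ (B : comPzRingType) :=
  GRing.Zmodule_isComPzRing.Build (dual B) (@dmulA B) (@dmulC B) (@dmul1 B) (@dmulDl B).

Record smod (K : pzRingType) (V : lmodType K) := SMod {
  sp : V -> Prop;
  sp0 : sp 0;
  spD : forall u v, sp u -> sp v -> sp (u + v);
  spZ : forall a u, sp u -> sp (a *: u) }.

Definition spb (K : pzRingType) (V : lmodType K) (P : smod V) (v : V) : bool :=
  if excluded_middle_informative (sp P v) then true else false.
Lemma spbP (K : pzRingType) (V : lmodType K) (P : smod V) v : spb P v = true <-> sp P v.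
Proof. by rewrite /spb; case: excluded_middle_informative. Qed.

Definition subm (K : pzRingType) (V : lmodType K) (P : smod V) : Type := {v : V | spb P v}.
HB.instance Definition _ (K : pzRingType) (V : lmodType K) (P : smod V) :=
  Choice.on (subm P).

Section SubmTh.
Variables (K : pzRingType) (V : lmodType K) (P : smod V).
Definition smk (v : V) (h : sp P v) : subm P := exist _ v (proj2 (spbP P v) h).
Definition sm0 : subm P := smk (sp0 P).
Definition smadd (x y : subm P) : subm P :=
  smk (spD (proj1 (spbP _ _) (proj2_sig x)) (proj1 (spbP _ _) (proj2_sig y))).
Definition smscale (a : K) (x : subm P) : subm P := smk (spZ a (proj1 (spbP _ _) (proj2_sig x))).
Definition smopp (x : subm P) : subm P := smscale (-1) x.
Lemma sm_inj (x y : subm P) : proj1_sig x = proj1_sig y -> x = y.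
Proof.
case: x y => [x hx] [y hy] /= e; subst y; congr exist; exact: bool_irrelevance.
Qed.
Fact smaddA : associative smadd.
Proof. by move=> x y z; apply: sm_inj; rewrite /= addrA. Qed.
Fact smaddC : commutative smadd.
Proof. by move=> x y; apply: sm_inj; rewrite /= addrC. Qed.
Fact smadd0 : left_id sm0 smadd.
Proof. by move=> x; apply: sm_inj; rewrite /= add0r. Qed.
Fact smaddN : left_inverse sm0 smopp smadd.
Proof. by move=> x; apply: sm_inj; rewrite /= scaleN1r addNr. Qed.
End SubmTh.
HB.instance Definition _ (K : pzRingType) (V : lmodType K) (P : smod V) :=
  GRing.isZmodule.Build (subm P) (@smaddA K V P) (@smaddC K V P) (@smadd0 K V P) (@smaddN K V P).
Section SubmTh2.
Variables (K : pzRingType) (V : lmodType K) (P : smod V).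
Fact smscaleA a b (v : subm P) : smscale a (smscale b v) = smscale (a * b) v.
Proof. by apply: sm_inj; rewrite /= scalerA. Qed.
Fact smscale1 : left_id 1 (@smscale K V P).
Proof. by move=> v; apply: sm_inj; rewrite /= scale1r. Qed.
Fact smscaleDr : right_distributive (@smscale K V P) +%R.
Proof. by move=> a u v; apply: sm_inj; rewrite /= scalerDr. Qed.
Fact smscaleDl (v : subm P) : {morph (@smscale K V P) ^~ v : a b / a + b}.
Proof. by move=> a b; apply: sm_inj; rewrite /= scalerDl. Qed.
End SubmTh2.
HB.instance Definition _ (K : pzRingType) (V : lmodType K) (P : smod V) :=
  GRing.Zmodule_isLmodule.Build K (subm P) (@smscaleA K V P) (@smscale1 K V P)
    (@smscaleDr K V P) (@smscaleDl K V P).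

Lemma smval_lin (K : pzRingType) (V : lmodType K) (P : smod V) :
  is_lin (fun x : subm P => proj1_sig x).
Proof. by split. Qed.

Lemma is_lin_id (K : pzRingType) (V : lmodType K) : is_lin (@id V).
Proof. by split. Qed.

Lemma tensor_span (R : comPzRingType) (A : calg R) (U V : lmodType A) (T : tensor U V)
  (P : smod (tsp T)) : (forall u v, sp P (tm T u v)) -> forall w, sp P w.
Proof.
move=> hP w.
pose b (u : U) (v : V) : subm P := smk (hP u v).
have bb : is_bilin b.
  case: (tm_bil T) => h1 [h2 [h3 h4]].
  by split; [|split; [|split]] => *; apply: sm_inj; rewrite /= ?h1 ?h2 ?h3 ?h4.
have [phi [lphi ephi]] := tm_univ T bb.
have := @tm_uniq _ _ _ _ T _ (fun x => proj1_sig (phi x)) id _ (@is_lin_id _ _) _ w.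
move=> <-; first exact: (proj1 (spbP _ _) (proj2_sig (phi w))).
- by case: lphi => l1 l2; split=> *; rewrite ?l1 ?l2.
- by move=> u v; rewrite ephi.
Qed.

Lemma kahler_span (R : comPzRingType) (A : calg R) (O : kahler A)
  (P : smod (kmod O)) : (forall a, sp P (kd O a)) -> forall w, sp P w.
Proof.
move=> hP w.
pose D (a : A) : subm P := smk (hP a).
have dD : is_mder D.
  case: (kd_der O) => h1 [h2 h3].
  by split; [|split] => *; apply: sm_inj; rewrite /= ?h1 ?h2 ?h3.
have [phi [lphi ephi]] := kd_univ O dD.
have := @kd_uniq _ _ O _ (fun x => proj1_sig (phi x)) id _ (@is_lin_id _ _) _ w.
move=> <-; first exact: (proj1 (spbP _ _) (proj2_sig (phi w))).
- by case: lphi => l1 l2; split=> *; rewrite ?l1 ?l2.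
- by move=> a; rewrite ephi.
Qed.

Record twist (K : comPzRingType) := Twist {
  tV1 : lmodType K; tV2 : lmodType K; tW : K -> tV1 -> tV2;
  tWDa : forall a b x, tW (a + b) x = tW a x + tW b x;
  tWM : forall a b x, tW (a * b) x = a *: tW b x + b *: tW a x;
  tWDx : forall a x y, tW a (x + y) = tW a x + tW a y;
  tWZx : forall a b x, tW a (b *: x) = b *: tW a x }.
Arguments tW {K} t _ _.
Arguments tWDa {K} t a b x.
Arguments tWM {K} t a b x.
Arguments tWDx {K} t a x y.
Arguments tWZx {K} t a b x.

Definition twm (K : comPzRingType) (t : twist K) : Type := (tV1 t * tV2 t)%type.
HB.instance Definition _ (K : comPzRingType) (t : twist K) := GRing.Zmodule.on (twm t).
Section TwTh.
Variables (K : comPzRingType) (t : twist K).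
Definition twscale (a : K) (v : twm t) : twm t := (a *: v.1, a *: v.2 - tW t a v.1).
Lemma tW1 x : tW t 1 x = 0.
Proof.
have := tWM t 1 1 x; rewrite mulr1 scale1r => h.
by apply: (addrI (tW t 1 x)); rewrite addr0 -h.
Qed.
Lemma tWNx a x : tW t a (- x) = - tW t a x.
Proof. by apply: (addrI (tW t a x)); rewrite -tWDx !subrr; apply: (addrI (tW t a 0)); rewrite -tWDx !addr0. Qed.
Fact twscaleA a b v : twscale a (twscale b v) = twscale (a * b) v.
Proof.
case: v => x y; rewrite /twscale /=; congr pair; first by rewrite scalerA.
by rewrite tWM tWZx scalerBr scalerA opprD addrA.
Qed.
Fact twscale1 : left_id 1 twscale.
Proof. by case=> x y; rewrite /twscale /= !scale1r tW1 subr0. Qed.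
Fact twscaleDr : right_distributive twscale +%R.
Proof.
move=> a [x y] [x' y']; rewrite /twscale /=; congr pair; first by rewrite scalerDr.
by rewrite scalerDr tWDx opprD addrACA.
Qed.
Fact twscaleDl v : {morph twscale ^~ v : a b / a + b}.
Proof.
move=> a b; case: v => x y; rewrite /twscale /=; congr pair; first by rewrite scalerDl.
by rewrite scalerDl tWDa opprD addrACA.
Qed.
End TwTh.
HB.instance Definition _ (K : comPzRingType) (t : twist K) :=
  GRing.Zmodule_isLmodule.Build K (twm t) (@twscaleA K t) (@twscale1 K t)
    (@twscaleDr K t) (@twscaleDl K t).
Lemma twZ (K : comPzRingType) (t : twist K) a (v : twm t) :
  a *: v = (a *: v.1, a *: v.2 - tW t a v.1) :> (tV1 t * tV2 t).
Proof. by []. Qed.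

Definition dstr (R : comPzRingType) (B : calg R) (r : R) : dual B := (calg_str B r, 0).
Fact dstr_zmod (R : comPzRingType) (B : calg R) : zmod_morphism (@dstr R B).
Proof. by move=> x y; rewrite /dstr rmorphB; congr pair; rewrite subr0. Qed.
HB.instance Definition _ (R : comPzRingType) (B : calg R) :=
  GRing.isZmodMorphism.Build R (dual B) (@dstr R B) (@dstr_zmod R B).
Fact dstr_mon (R : comPzRingType) (B : calg R) : monoid_morphism (@dstr R B).
Proof.
split; first by rewrite /dstr rmorph1.
move=> x y; rewrite /dstr /= rmorphM; congr pair.
rewrite /dmul /=; by rewrite mulr0 mul0r addr0.
Qed.
HB.instance Definition _ (R : comPzRingType) (B : calg R) :=
  GRing.isMonoidMorphism.Build R (dual B) (@dstr R B) (@dstr_mon R B).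
Definition dualC (R : comPzRingType) (B : calg R) : calg R := @CAlg R (dual B) (@dstr R B).

Lemma dualCM (R : comPzRingType) (B : calg R) (x y : dualC B) :
  x * y = (x.1 * y.1, x.1 * y.2 + x.2 * y.1) :> (B * B).
Proof. by []. Qed.
Lemma dualC1 (R : comPzRingType) (B : calg R) : (1 : dualC B) = (1, 0) :> (B * B).
Proof. by []. Qed.
Lemma dualCD (R : comPzRingType) (B : calg R) (x y : dualC B) :
  x + y = (x.1 + y.1, x.2 + y.2) :> (B * B).
Proof. by []. Qed.
Lemma dualCS (R : comPzRingType) (B : calg R) r : calg_str (dualC B) r = (calg_str B r, 0) :> (B * B).
Proof. by []. Qed.


Section Gen.
Variable R : comPzRingType.

Lemma kdD (A : calg R) (O : kahler A) x y : kd O (x + y) = kd O x + kd O y.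
Proof. by case: (kd_der O). Qed.
Lemma kdM (A : calg R) (O : kahler A) x y : kd O (x * y) = x *: kd O y + y *: kd O x.
Proof. by case: (kd_der O) => _ []. Qed.
Lemma kd1 (A : calg R) (O : kahler A) : kd O 1 = 0.
Proof. have h := kdM O 1 1; rewrite mulr1 scale1r in h. by apply: (addrI (kd O 1)); rewrite addr0 -h. Qed.
Lemma kdS (A : calg R) (O : kahler A) r : kd O (calg_str A r) = 0.
Proof. by case: (kd_der O) => _ [h _]; rewrite -[calg_str A r]mulr1 h kd1 scaler0. Qed.
Lemma kdSM (A : calg R) (O : kahler A) r x : kd O (calg_str A r * x) = calg_str A r *: kd O x.
Proof. by case: (kd_der O) => _ [h _]. Qed.

Lemma amD (X Y : calg R) (f : X -> Y) : is_alg_map f -> forall x y, f (x + y) = f x + f y.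
Proof. by case. Qed.
Lemma amM (X Y : calg R) (f : X -> Y) : is_alg_map f -> forall x y, f (x * y) = f x * f y.
Proof. by case=> _ []. Qed.
Lemma am1 (X Y : calg R) (f : X -> Y) : is_alg_map f -> f 1 = 1.
Proof. by case=> _ [_ []]. Qed.
Lemma amS (X Y : calg R) (f : X -> Y) : is_alg_map f -> forall r, f (calg_str X r) = calg_str Y r.
Proof. by case=> _ [_ []]. Qed.
Lemma am0 (X Y : calg R) (f : X -> Y) : is_alg_map f -> f 0 = 0.
Proof. by move/amD/addf0. Qed.
Lemma amB (X Y : calg R) (f : X -> Y) : is_alg_map f -> forall x y, f (x - y) = f x - f y.
Proof. by move/amD/addfB. Qed.
Lemma am_sum (X Y : calg R) (f : X -> Y) (I : Type) (s : seq I) F :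
  is_alg_map f -> f (\sum_(i <- s) F i) = \sum_(i <- s) f (F i).
Proof. by move/amD/addf_sum. Qed.
Lemma am_comp (X Y Z : calg R) (f : X -> Y) (g : Y -> Z) :
  is_alg_map f -> is_alg_map g -> is_alg_map (fun x => g (f x)).
Proof.
move=> hf hg; split; [|split; [|split]] => *.
- by rewrite (amD hf) (amD hg).
- by rewrite (amM hf) (amM hg).
- by rewrite (am1 hf) (am1 hg).
- by rewrite (amS hf) (amS hg).
Qed.

Definition rmap_of (X Y : calg R) (f : X -> Y) (h : is_alg_map f) : rmap X Y :=
  @RMap X Y f (amD h) (amM h) (am1 h).

Lemma linD (K : pzRingType) (U V : lmodType K) (f : U -> V) : is_lin f -> forall x y, f (x + y) = f x + f y.
Proof. by case. Qed.
Lemma linZ (K : pzRingType) (U V : lmodType K) (f : U -> V) : is_lin f -> forall a x, f (a *: x) = a *: f x.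
Proof. by case. Qed.

Lemma siMD (A : calg R) (M : lmodType A) (S : symalg M) x y : siM S (x + y) = siM S x + siM S y.
Proof. exact: siM_add. Qed.
End Gen.


Section Main.
Variables (R : comPzRingType) (A : calg R) (M : lmodType A)
  (OA : kahler A) (OAM : tensor (kmod OA) M)
  (O2 : ext2 (kmod OA)) (O2M : tensor (esp O2) M)
  (S : symalg M) (OS : kahler (sym S)) (TS : symalg (kmod OS))
  (OTS : kahler (sym TS)) (T2 : symalg (kmod OTS))
  (nabla : M -> tsp OAM) (Hnabla : is_connection nabla).

Lemma tmDl u1 u2 (v : M) : tm OAM (u1 + u2) v = tm OAM u1 v + tm OAM u2 v.
Proof. by case: (tm_bil OAM). Qed.
Lemma tmDr u (v1 v2 : M) : tm OAM u (v1 + v2) = tm OAM u v1 + tm OAM u v2.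
Proof. by case: (tm_bil OAM) => _ []. Qed.
Lemma tmZl a u (v : M) : tm OAM (a *: u) v = a *: tm OAM u v.
Proof. by case: (tm_bil OAM) => _ [_ []]. Qed.
Lemma tmZr a u (v : M) : tm OAM u (a *: v) = a *: tm OAM u v.
Proof. by case: (tm_bil OAM) => _ [_ []]. Qed.

Lemma om_span (w : kmod OA) : exists s : seq (A * A), w = \sum_(p <- s) p.1 *: kd OA p.2.
Proof.
pose P (w : kmod OA) := exists s : seq (A * A), w = \sum_(p <- s) p.1 *: kd OA p.2.
have p0 : P 0 by exists [::]; rewrite big_nil.
have pD : forall u v, P u -> P v -> P (u + v).
  by move=> u v [s1 ->] [s2 ->]; exists (s1 ++ s2); rewrite big_cat.
have pZ : forall a u, P u -> P (a *: u).
  move=> a u [s ->]; exists (map (fun p => (a * p.1, p.2)) s).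
  by rewrite big_map scaler_sumr; apply: eq_bigr => p _; rewrite scalerA.
apply: (@kahler_span _ _ _ (@SMod _ _ P p0 pD pZ)) => a /=.
by exists [:: (1, a)]; rewrite big_seq1 scale1r.
Qed.

Lemma rep (w : tsp OAM) : exists s : seq (A * M), w = \sum_(p <- s) tm OAM (kd OA p.1) p.2.
Proof.
pose P (w : tsp OAM) := exists s : seq (A * M), w = \sum_(p <- s) tm OAM (kd OA p.1) p.2.
have p0 : P 0 by exists [::]; rewrite big_nil.
have pD : forall u v, P u -> P v -> P (u + v).
  by move=> u v [s1 ->] [s2 ->]; exists (s1 ++ s2); rewrite big_cat.
have pZ : forall a u, P u -> P (a *: u).
  move=> a u [s ->]; exists (map (fun p => (p.1, a *: p.2)) s).
  by rewrite big_map scaler_sumr; apply: eq_bigr => p _; rewrite tmZr.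
apply: (@tensor_span _ _ _ _ _ (@SMod _ _ P p0 pD pZ)) => u v /=.
have [s ->] := om_span u.
exists (map (fun p => (p.2, p.1 *: v)) s); rewrite big_map.
rewrite (@addf_sum _ _ (fun u => tm OAM u v)); last by move=> *; rewrite tmDl.
by apply: eq_bigr => p _; rewrite tmZl tmZr.
Qed.


Definition rA : rmap A (sym TS) := rmap_of (am_comp (siA_alg S) (siA_alg TS)).

Lemma siA_TS_alg : is_alg_map (fun a : A => iT TS (siA S a)).
Proof. exact: am_comp (siA_alg S) (siA_alg TS). Qed.

Lemma dTD x y : dT TS (x + y) = dT TS x + dT TS y.
Proof. by rewrite /dT kdD siM_add. Qed.
Lemma dTM x y : dT TS (x * y) = iT TS x * dT TS y + iT TS y * dT TS x.
Proof. by rewrite /dT kdM siM_add !siM_scale. Qed.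
Lemma dTS r : dT TS (calg_str (sym S) r) = 0.
Proof. by rewrite /dT kdS; apply: addf0 => *; exact: siM_add. Qed.

Lemma lam_ex : exists lam : (kmod OA -> via rA), is_lin lam /\
  forall a, lam (kd OA a) = (dT TS (siA S a) : via rA).
Proof.
apply: kd_univ; split; [|split] => *.
- by rewrite (amD (siA_alg S)) dTD.
- by rewrite viaZ /= (amM (siA_alg S)) (amS (siA_alg S)) dTM dTS mulr0 addr0.
- by rewrite !viaZ /= (amM (siA_alg S)) dTM addrC.
Qed.

Lemma L_ex : exists L : (tsp OAM -> via rA), is_lin L /\
  forall a m, L (tm OAM (kd OA a) m) = (iT TS (siM S m) * dT TS (siA S a) : sym TS).
Proof.
have [lam [llam elam]] := lam_ex.
have bb : is_bilin (fun (w : kmod OA) (m : M) => (iT TS (siM S m) * lam w : via rA)).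
  split; [|split; [|split]] => *.
  - by rewrite (linD llam) mulrDr.
  - by rewrite siM_add /iT (amD (siA_alg TS)) mulrDl.
  - by rewrite (linZ llam) !viaZ mulrCA.
  - by rewrite viaZ siM_scale /iT (amM (siA_alg TS)) mulrA.
have [L [lL eL]] := tm_univ OAM bb.
by exists L; split => // a m; rewrite eL elam.
Qed.

Notation K := (Knabla TS nabla).
Lemma KPall : is_alg_map K /\
    (forall a, K (siA S a) = iT TS (siA S a)) /\
    (forall m (s : seq (A * M)),
        nabla m = \sum_(p <- s) tm OAM (kd OA p.1) p.2 ->
        K (siM S m) = dT TS (siM S m) - \sum_(p <- s) iT TS (siM S p.2) * dT TS (siA S p.1)).
Proof.
rewrite /Knabla; match goal with |- context [the_obj ?P ?d] => apply: (@the_objP _ P d) end.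
have [L [lL eL]] := L_ex.
case: Hnabla => nD [nS nZ].
have gD : forall m1 m2, (dT TS (siM S (m1 + m2)) - (L (nabla (m1 + m2)) : sym TS)) =
   (dT TS (siM S m1) - (L (nabla m1) : sym TS)) + (dT TS (siM S m2) - (L (nabla m2) : sym TS)).
  by move=> m1 m2; rewrite siM_add dTD nD (linD lL) opprD addrACA.
have gZ : forall a m, (dT TS (siM S (a *: m)) - (L (nabla (a *: m)) : sym TS)) =
   iT TS (siA S a) * (dT TS (siM S m) - (L (nabla m) : sym TS)).
  move=> a m; rewrite siM_scale dTM nZ (linD lL) (linZ lL) viaZ eL /=.
  by rewrite mulrBr opprD addrA addrAC [iT TS (siM S m) * _]mulrC addrK.
have [k [ak [kA kM]]] := sym_univ S siA_TS_alg gD gZ.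
exists k; split => //; split => // m s hs.
rewrite kM hs (addf_sum _ _ (linD lL)); congr (_ - _).
by apply: eq_bigr => p _; rewrite eL.
Qed.

Ltac objP := match goal with |- context [the_obj ?P ?d] => apply: (@the_objP _ P d) end.

Lemma dT2D x y : dT2 T2 (x + y) = dT2 T2 x + dT2 T2 y.
Proof. by rewrite /dT2 kdD siM_add. Qed.
Lemma dT2M x y : dT2 T2 (x * y) = iT2 T2 x * dT2 T2 y + iT2 T2 y * dT2 T2 x.
Proof. by rewrite /dT2 kdM siM_add !siM_scale. Qed.
Lemma dT2S r : dT2 T2 (calg_str (sym TS) r) = 0.
Proof. by rewrite /dT2 kdS; apply: addf0 => *; exact: siM_add. Qed.
Lemma dT20 : dT2 T2 0 = 0.
Proof. exact: (addf0 dT2D). Qed.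
Lemma dT0 : dT TS 0 = 0.
Proof. exact: (addf0 dTD). Qed.
Lemma dT2B x y : dT2 T2 (x - y) = dT2 T2 x - dT2 T2 y.
Proof. exact: (addfB dT2D). Qed.
Lemma dTB x y : dT TS (x - y) = dT TS x - dT TS y.
Proof. exact: (addfB dTD). Qed.
Lemma dT2_sum (I : Type) (s : seq I) F : dT2 T2 (\sum_(i <- s) F i) = \sum_(i <- s) dT2 T2 (F i).
Proof. exact: (addf_sum _ _ dT2D). Qed.

Lemma Tmap_ex (h : sym S -> sym TS) : is_alg_map h ->
  exists f : sym TS -> sym T2, is_alg_map f /\ (forall x, f (iT TS x) = iT2 T2 (h x)) /\
    (forall x, f (dT TS x) = dT2 T2 (h x)).
Proof.
move=> hh.
have ah : is_alg_map (fun x => iT2 T2 (h x)) := am_comp hh (siA_alg T2).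
pose rK : rmap (sym S) (sym T2) := rmap_of ah.
have [phi [lphi ephi]] : exists phi : (kmod OS -> via rK), is_lin phi /\
   forall x, phi (kd OS x) = (dT2 T2 (h x) : via rK).
  apply: kd_univ; split; [|split] => *.
  - by rewrite (amD hh) dT2D.
  - by rewrite viaZ /= (amM hh) (amS hh) dT2M dT2S mulr0 addr0.
  - by rewrite !viaZ /= (amM hh) dT2M addrC.
have gD : forall w1 w2, (phi (w1 + w2) : sym T2) = phi w1 + phi w2 by exact: linD lphi.
have gZ : forall a w, (phi (a *: w) : sym T2) = iT2 T2 (h a) * phi w.
  by move=> a w; rewrite (linZ lphi).
have [f [af [fA fM]]] := sym_univ TS ah gD gZ.
exists f; split => //; split => x; first exact: fA.
by rewrite /dT fM ephi.
Qed.

Lemma TmP : is_alg_map (Tmap T2 K) /\ (forall x, Tmap T2 K (iT TS x) = iT2 T2 (K x)) /\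
    (forall x, Tmap T2 K (dT TS x) = dT2 T2 (K x)).
Proof. rewrite /Tmap; objP; exact: Tmap_ex (proj1 KPall). Qed.

Lemma iTalg : is_alg_map (iT TS). Proof. exact: siA_alg. Qed.
Lemma iT2alg : is_alg_map (iT2 T2). Proof. exact: siA_alg. Qed.
Lemma dT1 : dT TS 1 = 0.
Proof. by rewrite /dT kd1; apply: addf0 => *; exact: siM_add. Qed.
Lemma dT21 : dT2 T2 1 = 0.
Proof. by rewrite /dT2 kd1; apply: addf0 => *; exact: siM_add. Qed.

Lemma cflip_ex : exists f : sym T2 -> sym T2,
    is_alg_map f /\
    (forall b, f (iT2 T2 (iT TS b)) = iT2 T2 (iT TS b)) /\
    (forall b, f (iT2 T2 (dT TS b)) = dT2 T2 (iT TS b)) /\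
    (forall b, f (dT2 T2 (iT TS b)) = iT2 T2 (dT TS b)) /\
    (forall b, f (dT2 T2 (dT TS b)) = dT2 T2 (dT TS b)).
Proof.
pose f0 (b : sym S) : dualC (sym T2) := (iT2 T2 (iT TS b), iT2 T2 (dT TS b)).
have af0 : is_alg_map f0.
  split; [|split; [|split]] => *; rewrite /f0.
  - by rewrite dualCD /= (amD iTalg) dTD !(amD iT2alg).
  - rewrite dualCM /= (amM iTalg) dTM (amD iT2alg) !(amM iT2alg).
    by congr pair; congr (_ + _); rewrite mulrC.
  - by rewrite dualC1 (am1 iTalg) (am1 iT2alg) dT1 (am0 iT2alg).
  - by rewrite dualCS (amS iTalg) (amS iT2alg) dTS (am0 iT2alg).
pose r0 : rmap (sym S) (dualC (sym T2)) := rmap_of af0.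
have [g0 [lg0 eg0]] : exists g0 : (kmod OS -> via r0), is_lin g0 /\
   forall b, g0 (kd OS b) = ((dT2 T2 (iT TS b), dT2 T2 (dT TS b)) : dualC (sym T2)).
  apply: kd_univ; split; [|split] => *.
  - by rewrite dualCD /= (amD iTalg) dTD !dT2D.
  - rewrite viaZ /= dualCM /= /f0 /= (amM iTalg) (amS iTalg) dTM dTS mulr0 addr0.
    by rewrite !dT2M !dT2S (amS iT2alg) !mulr0 !addr0 (amS iTalg) dT2S mulr0 addr0 (amS iT2alg) (am0 iT2alg) mul0r addr0.
  - rewrite !viaZ /= !dualCM /= dualCD /= /f0 /= (amM iTalg) dTM dT2M dT2D !dT2M.
    by congr pair; ring.
have gD : forall w1 w2, (g0 (w1 + w2) : dualC (sym T2)) = g0 w1 + g0 w2 by exact: linD lg0.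
have gZ : forall a w, (g0 (a *: w) : dualC (sym T2)) = f0 a * g0 w.
  by move=> a w; rewrite (linZ lg0).
have [F [aF [FA FM]]] := sym_univ TS af0 gD gZ.
pose c1 (y : sym TS) : sym T2 := (F y).1.
have ac1 : is_alg_map c1.
  split; [|split; [|split]] => *; rewrite /c1.
  - by rewrite (amD aF).
  - by rewrite (amM aF).
  - by rewrite (am1 aF).
  - by rewrite (amS aF).
pose r1 : rmap (sym TS) (sym T2) := rmap_of ac1.
have [phi [lphi ephi]] : exists phi : (kmod OTS -> via r1), is_lin phi /\
   forall y, phi (kd OTS y) = ((F y).2 : via r1).
  apply: kd_univ; split; [|split] => *.
  - by rewrite (amD aF).
  - rewrite viaZ /= (amM aF) dualCM /= (amS aF) dualCS /=.
    by rewrite mul0r addr0 /c1 (amS aF) dualCS.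
  - by rewrite !viaZ /= (amM aF) dualCM /= /c1; ring.
have hD : forall w1 w2, (phi (w1 + w2) : sym T2) = phi w1 + phi w2 by exact: linD lphi.
have hZ : forall a w, (phi (a *: w) : sym T2) = c1 a * phi w.
  by move=> a w; rewrite (linZ lphi).
have [c [ac [cA cM]]] := sym_univ T2 ac1 hD hZ.
exists c; split => //.
have e1 b : F (iT TS b) = f0 b by exact: FA.
have e2 b : F (dT TS b) = ((dT2 T2 (iT TS b), dT2 T2 (dT TS b)) : dualC (sym T2)).
  by rewrite /dT FM eg0.
rewrite /iT2 /dT2; split; [|split; [|split]] => b.
- by rewrite cA /c1 e1.
- by rewrite cA /c1 e2.
- by rewrite cM ephi e1.
- by rewrite cM ephi e2.
Qed.

Lemma cfP : is_alg_map (@cflip R A M S OS TS OTS T2) /\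
    (forall b, cflip (iT2 T2 (iT TS b)) = iT2 T2 (iT TS b)) /\
    (forall b, cflip (iT2 T2 (dT TS b)) = dT2 T2 (iT TS b)) /\
    (forall b, cflip (dT2 T2 (iT TS b)) = iT2 T2 (dT TS b)) /\
    (forall b, cflip (dT2 T2 (dT TS b)) = dT2 T2 (dT TS b)).
Proof. rewrite /cflip; objP; exact: cflip_ex. Qed.

Notation cf := (@cflip R A M S OS TS OTS T2).
Notation Tm := (Tmap T2 K).

Lemma KA a : K (siA S a) = iT TS (siA S a).
Proof. by case: KPall => _ []. Qed.
Lemma Kalg : is_alg_map K. Proof. by case: KPall. Qed.
Lemma Tmalg : is_alg_map Tm. Proof. by case: TmP. Qed.
Lemma TmI x : Tm (iT TS x) = iT2 T2 (K x). Proof. by case: TmP => _ []. Qed.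
Lemma TmD x : Tm (dT TS x) = dT2 T2 (K x). Proof. by case: TmP => _ []. Qed.
Lemma cfalg : is_alg_map cf. Proof. by case: cfP. Qed.
Lemma cfII b : cf (iT2 T2 (iT TS b)) = iT2 T2 (iT TS b). Proof. by case: cfP => _ []. Qed.
Lemma cfID b : cf (iT2 T2 (dT TS b)) = dT2 T2 (iT TS b). Proof. by case: cfP => _ [_ []]. Qed.
Lemma cfDI b : cf (dT2 T2 (iT TS b)) = iT2 T2 (dT TS b). Proof. by case: cfP => _ [_ [_ []]]. Qed.
Lemma cfDD b : cf (dT2 T2 (dT TS b)) = dT2 T2 (dT TS b). Proof. by case: cfP => _ [_ [_ [_ ]]]. Qed.

Lemma CP : is_alg_map (curvK T2 K) /\
    (forall a, curvK T2 K (siA S a) = cf (Tm (K (siA S a)))) /\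
    (forall m, curvK T2 K (siM S m) = cf (Tm (K (siM S m))) - Tm (K (siM S m))).
Proof.
rewrite /curvK; objP.
have af : is_alg_map (fun a : A => iT2 T2 (iT TS (siA S a))).
  exact: am_comp (am_comp (siA_alg S) iTalg) iT2alg.
have gD : forall m1 m2, cf (Tm (K (siM S (m1 + m2)))) - Tm (K (siM S (m1 + m2))) =
   (cf (Tm (K (siM S m1))) - Tm (K (siM S m1))) + (cf (Tm (K (siM S m2))) - Tm (K (siM S m2))).
  by move=> m1 m2; rewrite siM_add (amD Kalg) (amD Tmalg) (amD cfalg) opprD addrACA.
have gZ : forall a m, cf (Tm (K (siM S (a *: m)))) - Tm (K (siM S (a *: m))) =
   iT2 T2 (iT TS (siA S a)) * (cf (Tm (K (siM S m))) - Tm (K (siM S m))).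
  by move=> a m; rewrite siM_scale (amM Kalg) KA (amM Tmalg) TmI KA (amM cfalg) cfII mulrBr.
have [f [aF [fA fM]]] := sym_univ S af gD gZ.
exists f; split => //; split => // a.
by rewrite fA KA TmI KA cfII.
Qed.

Lemma part1 a : curvK T2 K (siA S a) = iT2 T2 (iT TS (siA S a)).
Proof. by case: CP => _ [-> _]; rewrite KA TmI KA cfII. Qed.

Lemma aT2 : is_alg_map (fun a : A => iT2 T2 (iT TS (siA S a))).
Proof. exact: am_comp (am_comp (siA_alg S) iTalg) iT2alg. Qed.
Definition rT2 : rmap A (sym T2) := rmap_of aT2.

Lemma psi_ex : exists f : tsp O2M -> sym T2,
    forall s : seq (A * A * M),
      f (\sum_(x <- s) tm O2M (wedge O2 (kd OA x.1.1) (kd OA x.1.2)) x.2) =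
      \sum_(x <- s)
        (iT2 T2 (iT TS (siM S x.2)) * iT2 T2 (dT TS (siA S x.1.1)) * dT2 T2 (iT TS (siA S x.1.2))
         - iT2 T2 (iT TS (siM S x.2)) * dT2 T2 (iT TS (siA S x.1.1)) * iT2 T2 (dT TS (siA S x.1.2))).
Proof.
have [l1 [ll1 el1]] : exists l1 : (kmod OA -> via rT2), is_lin l1 /\
   forall a, l1 (kd OA a) = (iT2 T2 (dT TS (siA S a)) : via rT2).
  apply: kd_univ; split; [|split] => *.
  - by rewrite (amD (siA_alg S)) dTD (amD iT2alg).
  - rewrite viaZ /= (amM (siA_alg S)) (amS (siA_alg S)) dTM dTS mulr0 addr0.
    by rewrite (amM iT2alg) (amS iTalg).
  - by rewrite !viaZ /= (amM (siA_alg S)) dTM (amD iT2alg) !(amM iT2alg) addrC.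
have [l2 [ll2 el2]] : exists l2 : (kmod OA -> via rT2), is_lin l2 /\
   forall a, l2 (kd OA a) = (dT2 T2 (iT TS (siA S a)) : via rT2).
  apply: kd_univ; split; [|split] => *.
  - by rewrite (amD (siA_alg S)) (amD iTalg) dT2D.
  - rewrite viaZ /= (amM (siA_alg S)) (amS (siA_alg S)) (amM iTalg) (amS iTalg).
    by rewrite dT2M dT2S mulr0 addr0 (amS iT2alg).
  - by rewrite !viaZ /= (amM (siA_alg S)) (amM iTalg) dT2M addrC.
have bb : is_bilin (fun u v : kmod OA => (l1 u * l2 v - l2 u * l1 v : via rT2)).
  split; [|split; [|split]] => *.
  - by rewrite (linD ll1) (linD ll2); ring.
  - by rewrite (linD ll1) (linD ll2); ring.
  - by rewrite (linZ ll1) (linZ ll2) !viaZ /=; ring.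
  - by rewrite (linZ ll1) (linZ ll2) !viaZ /=; ring.
have [p0 [lp0 ep0]] := wedge_univ O2 bb (fun u => etrans (congr1 (fun z => _ - z) (mulrC _ _)) (subrr _)).
have bb2 : is_bilin (fun (t : esp O2) (m : M) => (iT2 T2 (iT TS (siM S m)) * p0 t : via rT2)).
  split; [|split; [|split]] => *.
  - by rewrite (linD lp0) mulrDr.
  - by rewrite siM_add (amD iTalg) (amD iT2alg) mulrDl.
  - by rewrite (linZ lp0) !viaZ /= mulrCA.
  - by rewrite siM_scale (amM iTalg) (amM iT2alg) !viaZ /= mulrA.
have [p [lp ep]] := tm_univ O2M bb2.
exists p => s; rewrite (addf_sum _ _ (linD lp)); apply: eq_bigr => x _.
by rewrite ep ep0 !el1 !el2 /=; ring.
Qed.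

Lemma psiP : forall s : seq (A * A * M),
      psi T2 (\sum_(x <- s) tm O2M (wedge O2 (kd OA x.1.1) (kd OA x.1.2)) x.2) =
      \sum_(x <- s)
        (iT2 T2 (iT TS (siM S x.2)) * iT2 T2 (dT TS (siA S x.1.1)) * dT2 T2 (iT TS (siA S x.1.2))
         - iT2 T2 (iT TS (siM S x.2)) * dT2 T2 (iT TS (siA S x.1.1)) * iT2 T2 (dT TS (siA S x.1.2))).
Proof. rewrite /psi; objP; exact: psi_ex. Qed.

Lemma psi0 : @psi R A M OA O2 O2M S OS TS OTS T2 0 = 0.
Proof. by have := psiP [::]; rewrite !big_nil. Qed.

Lemma wDl u1 u2 v : wedge O2 (u1 + u2) v = wedge O2 u1 v + wedge O2 u2 v.
Proof. by case: (wedge_bil O2). Qed.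
Lemma wDr u v1 v2 : wedge O2 u (v1 + v2) = wedge O2 u v1 + wedge O2 u v2.
Proof. by case: (wedge_bil O2) => _ []. Qed.
Lemma wZl a u v : wedge O2 (a *: u) v = a *: wedge O2 u v.
Proof. by case: (wedge_bil O2) => _ [_ []]. Qed.
Lemma wZr a u v : wedge O2 u (a *: v) = a *: wedge O2 u v.
Proof. by case: (wedge_bil O2) => _ [_ []]. Qed.
Lemma wanti u v : wedge O2 u v + wedge O2 v u = 0.
Proof.
have := wedge_alt O2 (u + v); rewrite wDl !wDr !wedge_alt add0r addr0.
by [].
Qed.
Lemma w0l v : wedge O2 0 v = 0.
Proof. exact: (addf0 (fun x y => wDl x y v)). Qed.

Lemma t2Dl u1 u2 (v : M) : tm O2M (u1 + u2) v = tm O2M u1 v + tm O2M u2 v.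
Proof. by case: (tm_bil O2M). Qed.
Lemma t2Dr u (v1 v2 : M) : tm O2M u (v1 + v2) = tm O2M u v1 + tm O2M u v2.
Proof. by case: (tm_bil O2M) => _ []. Qed.
Lemma t2Zl a u (v : M) : tm O2M (a *: u) v = a *: tm O2M u v.
Proof. by case: (tm_bil O2M) => _ [_ []]. Qed.
Lemma t2Zr a u (v : M) : tm O2M u (a *: v) = a *: tm O2M u v.
Proof. by case: (tm_bil O2M) => _ [_ []]. Qed.
Lemma t20l (v : M) : tm O2M 0 v = 0.
Proof. exact: (addf0 (fun x y => t2Dl x y v)). Qed.

Definition WdP (a : A) (f : tsp OAM -> tsp O2M) :=
  is_lin f /\ forall w n, f (tm OAM w n) = tm O2M (wedge O2 (kd OA a) w) n.
Definition Wd (a : A) := the_obj (WdP a) (fun _ => 0).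
Lemma Wd_spec a : WdP a (Wd a).
Proof.
rewrite /Wd; objP; apply: tm_univ.
split; [|split; [|split]] => *.
- by rewrite wDr t2Dl.
- by rewrite t2Dr.
- by rewrite wZr t2Zl.
- by rewrite t2Zr.
Qed.
Lemma Wdlin a : is_lin (Wd a). Proof. by case: (Wd_spec a). Qed.
Lemma Wdtm a w n : Wd a (tm OAM w n) = tm O2M (wedge O2 (kd OA a) w) n.
Proof. by case: (Wd_spec a). Qed.

Lemma lin_add (K0 : pzRingType) (U V : lmodType K0) (f g : U -> V) :
  is_lin f -> is_lin g -> is_lin (fun x => f x + g x).
Proof.
move=> hf hg; split=> *; first by rewrite (linD hf) (linD hg) addrACA.
by rewrite (linZ hf) (linZ hg) scalerDr.
Qed.
Lemma lin_scale (K0 : comPzRingType) (U V : lmodType K0) (f : U -> V) b :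
  is_lin f -> is_lin (fun x => b *: f x).
Proof.
move=> hf; split=> *; first by rewrite (linD hf) scalerDr.
by rewrite (linZ hf) !scalerA mulrC.
Qed.
Lemma lin_zero (K0 : pzRingType) (U V : lmodType K0) : is_lin (fun _ : U => (0 : V)).
Proof. by split=> *; rewrite ?addr0 ?scaler0. Qed.

Lemma WdDa a b x : Wd (a + b) x = Wd a x + Wd b x.
Proof.
apply: (tm_uniq (Wdlin _) (lin_add (Wdlin a) (Wdlin b)) _ x) => w n.
by rewrite !Wdtm kdD wDl t2Dl.
Qed.
Lemma WdM a b x : Wd (a * b) x = a *: Wd b x + b *: Wd a x.
Proof.
apply: (tm_uniq (Wdlin _) (lin_add (lin_scale a (Wdlin b)) (lin_scale b (Wdlin a))) _ x) => w n.
by rewrite !Wdtm kdM wDl t2Dl !wZl !t2Zl.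
Qed.
Lemma WdDx a x y : Wd a (x + y) = Wd a x + Wd a y.
Proof. by case: (Wdlin a). Qed.
Lemma WdZx a b x : Wd a (b *: x) = b *: Wd a x.
Proof. by case: (Wdlin a). Qed.
Lemma Wd0 a x : kd OA a = 0 -> Wd a x = 0.
Proof.
move=> h; apply: (tm_uniq (Wdlin _) (@lin_zero _ _ (tsp O2M)) _ x) => w n.
by rewrite Wdtm h w0l t20l.
Qed.
Lemma Wdanti a b n : Wd a (tm OAM (kd OA b) n) = - Wd b (tm OAM (kd OA a) n).
Proof.
apply/eqP; rewrite -subr_eq0 opprK !Wdtm -t2Dl wanti; exact/eqP/t20l.
Qed.

Definition tw : twist A := @Twist A (tsp OAM) (tsp O2M) Wd WdDa WdM WdDx WdZx.

Lemma twD (u v : twm tw) : u + v = (u.1 + v.1, u.2 + v.2) :> (tsp OAM * tsp O2M).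
Proof. by []. Qed.

Definition del (m : M) (a : A) : twm tw := (tm OAM (kd OA a) m, Wd a (nabla m)).

Lemma del_der m : is_mder (del m).
Proof.
case: Hnabla => nD [nS nZ].
split; [|split] => *; rewrite /del.
- by rewrite twD /= kdD tmDl WdDa.
- rewrite twZ /= kdSM tmZl WdM (Wd0 _ (kdS _ _)) scaler0 addr0.
  by rewrite (Wd0 _ (kdS _ _)) subr0.
- rewrite twD !twZ /= kdM tmDl !tmZl WdM; congr pair.
  by rewrite Wdanti opprK addrACA subrr addr0.
Qed.

Definition phm (m : M) := the_obj (fun f : kmod OA -> twm tw =>
  is_lin f /\ forall a, f (kd OA a) = del m a) (fun _ => 0).
Lemma phm_spec m : is_lin (phm m) /\ forall a, phm m (kd OA a) = del m a.
Proof. rewrite /phm; objP; exact: kd_univ (del_der m). Qed.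

Lemma curv_ex m : exists v : tsp O2M,
    forall s : seq (A * M * seq (A * M)),
      nabla m = \sum_(x <- s) tm OAM (kd OA x.1.1) x.1.2 ->
      (forall x, x \in s -> nabla x.1.2 = \sum_(y <- x.2) tm OAM (kd OA y.1) y.2) ->
      v = \sum_(x <- s) \sum_(y <- x.2) tm O2M (wedge O2 (kd OA x.1.1) (kd OA y.1)) y.2.
Proof.
case: Hnabla => nD [nS nZ].
have bb : is_bilin (fun w (n : M) => phm n w).
  split; [|split; [|split]].
  - by move=> *; rewrite (linD (proj1 (phm_spec _))).
  - move=> w m1 m2.
    apply: (kd_uniq (proj1 (phm_spec _)) (lin_add (proj1 (phm_spec m1)) (proj1 (phm_spec m2))) _ w) => a.
    by rewrite !(proj2 (phm_spec _)) /del twD /= tmDr nD WdDx.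
  - by move=> *; rewrite (linZ (proj1 (phm_spec _))).
  - move=> c w n.
    apply: (kd_uniq (proj1 (phm_spec _)) (lin_scale c (proj1 (phm_spec n))) _ w) => b.
    rewrite !(proj2 (phm_spec _)) /del twZ /= tmZr nZ WdDx WdZx Wdanti.
    by [].
have [Ph [lPh ePh]] := tm_univ OAM bb.
exists (Ph (nabla m)).2 => s hs hx.
rewrite hs (addf_sum _ _ (linD lPh)).
rewrite (@addf_sum _ _ (fun z : twm tw => z.2)) //.
apply: eq_big_seq => x xs.
by rewrite ePh (proj2 (phm_spec _)) /del /= (hx x xs) (addf_sum _ _ (WdDx _)); apply: eq_bigr => y _; rewrite Wdtm.
Qed.

Lemma curv_spec m :
    forall s : seq (A * M * seq (A * M)),
      nabla m = \sum_(x <- s) tm OAM (kd OA x.1.1) x.1.2 ->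
      (forall x, x \in s -> nabla x.1.2 = \sum_(y <- x.2) tm OAM (kd OA y.1) y.2) ->
      curv O2M nabla m = \sum_(x <- s) \sum_(y <- x.2) tm O2M (wedge O2 (kd OA x.1.1) (kd OA y.1)) y.2.
Proof. rewrite /curv; objP; exact: curv_ex. Qed.

Definition repf (w : tsp OAM) : seq (A * M) := proj1_sig (constructive_indefinite_description _ (rep w)).
Lemma repfP w : w = \sum_(p <- repf w) tm OAM (kd OA p.1) p.2.
Proof. exact: proj2_sig (constructive_indefinite_description _ (rep w)). Qed.

Lemma KM m : K (siM S m) = dT TS (siM S m) - \sum_(p <- repf (nabla m)) iT TS (siM S p.2) * dT TS (siA S p.1).
Proof. by case: KPall => _ [_ h]; apply: h; exact: repfP. Qed.

Lemma part2 m : curvK T2 K (siM S m) = @psi R A M OA O2 O2M S OS TS OTS T2 (curv O2M nabla m).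
Proof.
set s := repf (nabla m).
pose s' := map (fun p => (p, repf (nabla p.2))) s.
have -> : curv O2M nabla m =
    \sum_(x <- s') \sum_(y <- x.2) tm O2M (wedge O2 (kd OA x.1.1) (kd OA y.1)) y.2.
  apply: curv_spec; first by rewrite big_map; exact: repfP.
  by move=> x /mapP [p _ ->]; exact: repfP.
pose s2 := flatten (map (fun x => map (fun y => (x.1.1, y.1, y.2)) x.2) s').
have -> : \sum_(x <- s') \sum_(y <- x.2) tm O2M (wedge O2 (kd OA x.1.1) (kd OA y.1)) y.2 =
   \sum_(x <- s2) tm O2M (wedge O2 (kd OA x.1.1) (kd OA x.1.2)) x.2.
  by rewrite /s2 big_flatten big_map; apply: eq_bigr => x _; rewrite big_map.
rewrite psiP /s2 big_flatten big_map /s' big_map.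
under eq_bigr do rewrite big_map /=.
case: CP => _ [_ ->].
pose I b := iT2 T2 (iT TS b).
pose P b := iT2 T2 (dT TS b).
pose Q b := dT2 T2 (iT TS b).
pose G (p : A * M) := I (siM S p.2) * dT2 T2 (dT TS (siA S p.1)) + P (siA S p.1) * Q (siM S p.2) +
   (P (siM S p.2) - \sum_(q <- repf (nabla p.2)) I (siM S q.2) * P (siA S q.1)) * Q (siA S p.1).
pose G' (p : A * M) := I (siM S p.2) * dT2 T2 (dT TS (siA S p.1)) + Q (siA S p.1) * P (siM S p.2) +
   (Q (siM S p.2) - \sum_(q <- repf (nabla p.2)) I (siM S q.2) * Q (siA S q.1)) * P (siA S p.1).
have TmX : Tm (K (siM S m)) = dT2 T2 (dT TS (siM S m)) - \sum_(p <- s) G p.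
  rewrite {1}KM (amB Tmalg) TmD KM (am_sum _ _ Tmalg) dT2B dT2_sum -addrA -opprD -big_split.
  congr (_ - _); apply: eq_bigr => p _.
  rewrite dT2M (amM Tmalg) TmI TmD KA KM (amB iT2alg) (am_sum _ _ iT2alg).
  by rewrite /G; congr (_ + _); congr (_ * _); congr (_ - _); apply: eq_bigr => q _; rewrite (amM iT2alg).
have cfX : cf (Tm (K (siM S m))) = dT2 T2 (dT TS (siM S m)) - \sum_(p <- s) G' p.
  rewrite TmX (amB cfalg) cfDD (am_sum _ _ cfalg); congr (_ - _); apply: eq_bigr => p _.
  rewrite /G /G' !(amD cfalg) !(amM cfalg) (amB cfalg) (am_sum _ _ cfalg) /I /P /Q cfII cfDD cfID !cfDI cfID.
  congr (_ + _); congr (_ * _); congr (_ - _); apply: eq_bigr => q _.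
  by rewrite (amM cfalg) cfII cfID.
rewrite cfX TmX opprB addrC addrA subrK -sumrB; apply: eq_bigr => p _.
rewrite /G /G'.
set S1 := \sum_(q <- _) I _ * P _.
set S2 := \sum_(q <- _) I _ * Q _.
have -> : \sum_(q <- repf (nabla p.2))
      (iT2 T2 (iT TS (siM S q.2)) * iT2 T2 (dT TS (siA S p.1)) * dT2 T2 (iT TS (siA S q.1)) -
       iT2 T2 (iT TS (siM S q.2)) * dT2 T2 (iT TS (siA S p.1)) * iT2 T2 (dT TS (siA S q.1)))
    = S2 * P (siA S p.1) - S1 * Q (siA S p.1).
  rewrite /S1 /S2 !mulr_suml -sumrB; apply: eq_bigr => q _.
  by rewrite /I /P /Q; ring.
by rewrite /I /P /Q; ring.
Qed.

End Main.


Unset Implicit Arguments.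

Theorem mainTheorem10 (R : comPzRingType) (A : calg R) (M : lmodType A)
  (OA : kahler A) (OAM : tensor (kmod OA) M)
  (O2 : ext2 (kmod OA)) (O2M : tensor (esp O2) M)
  (S : symalg M) (OS : kahler (sym S)) (TS : symalg (kmod OS))
  (OTS : kahler (sym TS)) (T2 : symalg (kmod OTS))
  (nabla : M -> tsp OAM) (Hnabla : is_connection nabla) :
  (forall a : A, curvK T2 (Knabla TS nabla) (siA S a) = iT2 T2 (iT TS (siA S a))) /\
  (forall m : M, curvK T2 (Knabla TS nabla) (siM S m) = psi T2 (curv O2M nabla m)) /\
  ((forall m : M, curv O2M nabla m = 0) -> flat T2 (Knabla TS nabla)).
Proof.
have h1 : forall a : A, curvK T2 (Knabla TS nabla) (siA S a) = iT2 T2 (iT TS (siA S a)).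
  by move=> a; apply: part1.
have h2 : forall m : M, curvK T2 (Knabla TS nabla) (siM S m) = psi T2 (curv O2M nabla m).
  by move=> m; apply: part2.
split; first exact: h1.
split; first exact: h2.
move=> h0; split; first exact: h1.
by move=> m; rewrite h2 h0 psi0.
Qed.
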